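(* Let $L$ be a finite simple lattice such that the join of all atoms of $L$ equals $1$, or the meet of all coatoms of $L$ equals $0$. Then the only tolerances on $L$ are $\mathrm{id}_L$ and $L^2$, and consequently $\mathsf{C}(L)=\mathsf{Pol}_{0,1}(L)$.
   Context: $L$ has bounds $0,1$. An atom is an element covering $0$; a coatom is an element covered by $1$. $L$ is simple if its only congruences (compatible equivalence relations) are $\mathrm{id}_L=\{(x,x):x\in L\}$ and $L^2$. A tolerance on $L$ is a reflexive, symmetric binary relation $T$ such that $(a,b),(c,d)\in T$ imply $(a\vee c,b\vee d),(a\wedge c,b\wedge d)\in T$. An $n$-ary aggregation function on $L$ ($n\ge1$) is a nondecreasing map $A:L^n\to L$ with $A(0,\dots,0)=0$, $A(1,\dots,1)=1$; $\mathsf{C}(L)$ is the set of all of them. Polynomials on $L$ are functions $L^n\to L$ built from projections and constants by finitely many pointwise joins and meets; $\mathsf{Pol}_{0,1}(L)$ is the set of polynomials preserving $0$ and $1$. *)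

(* Defs.v *)
From HB Require Import structures.
From mathcomp Require Import all_boot all_order.
Set Implicit Arguments. Unset Strict Implicit. Unset Printing Implicit Defensive.
Import Order.TTheory.
Local Open Scope order_scope.

Section LatticeDefs.
Context {d : Order.disp_t} {L : finTBLatticeType d}.

Definition atom (a : L) : bool :=
  (\bot < a) && ~~ [exists x : L, (\bot < x) && (x < a)].
Definition coatom (a : L) : bool :=
  (a < \top) && ~~ [exists x : L, (a < x) && (x < \top)].

Definition lattice_compatible (R : L -> L -> Prop) : Prop :=
  forall a b c e : L, R a b -> R c e ->
    R (a `|` c) (b `|` e) /\ R (a `&` c) (b `&` e).

Definition congruence (R : L -> L -> Prop) : Prop :=
  (forall x, R x x) /\ (forall x y, R x y -> R y x) /\
  (forall x y z, R x y -> R y z -> R x z) /\ lattice_compatible R.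

Definition tolerance (R : L -> L -> Prop) : Prop :=
  (forall x, R x x) /\ (forall x y, R x y -> R y x) /\ lattice_compatible R.

Definition is_identity_rel (R : L -> L -> Prop) : Prop :=
  forall x y, R x y <-> x = y.
Definition is_full_rel (R : L -> L -> Prop) : Prop :=
  forall x y, R x y.

Definition simple_lattice : Prop :=
  forall R, congruence R -> is_identity_rel R \/ is_full_rel R.

Definition aggregation (n : nat) (A : ('I_n -> L) -> L) : Prop :=
  (forall x y : 'I_n -> L, (forall i, x i <= y i) -> A x <= A y) /\
  A (fun _ => \bot) = \bot /\ A (fun _ => \top) = \top.

End LatticeDefs.

Inductive lpoly (T : Type) (n : nat) : Type :=
| PVar of 'I_n
| PConst of T
| PJoin of lpoly T n & lpoly T n
| PMeet of lpoly T n & lpoly T n.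

Fixpoint lpoly_eval {d : Order.disp_t} {L : finTBLatticeType d} {n : nat}
    (p : lpoly L n) (x : 'I_n -> L) : L :=
  match p with
  | PVar i => x i
  | PConst c => c
  | PJoin p q => lpoly_eval p x `|` lpoly_eval q x
  | PMeet p q => lpoly_eval p x `&` lpoly_eval q x
  end.

Definition pol01 {d : Order.disp_t} {L : finTBLatticeType d} (n : nat)
    (f : ('I_n -> L) -> L) : Prop :=
  (exists p : lpoly L n, forall x, f x = lpoly_eval p x) /\
  f (fun _ => \bot) = \bot /\ f (fun _ => \top) = \top.

(* Main.v *)
Require Import Defs.
From HB Require Import structures.
From mathcomp Require Import all_boot all_order.
From Stdlib Require Import FunctionalExtensionality.
Import Order.TTheory.
Local Open Scope order_scope.
Set Implicit Arguments. Unset Strict Implicit.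
Section P1.
Context {d : Order.disp_t} {L : finTBLatticeType d}.
Variable T : L -> L -> Prop.
Hypothesis Trefl : forall x, T x x.
Hypothesis Tsym : forall x y, T x y -> T y x.
Hypothesis Tcomp0 : lattice_compatible T.
Let Tcomp {a b c e} (H1 : T a b) (H2 : T c e) := @Tcomp0 a b c e H1 H2.

Fixpoint chain (n : nat) (x y : L) : Prop :=
  match n with 0 => x = y | S n => exists z, T x z /\ chain n z y end.

Lemma chain_refl n x : chain n x x.
Proof. elim: n => [|n IH] //=; by exists x. Qed.

Lemma chain_comp n x y c e : chain n x y -> chain n c e ->
  chain n (x `|` c) (y `|` e) /\ chain n (x `&` c) (y `&` e).
Proof.
elim: n x c => [|n IH] x c /=; first by move=> -> ->.
move=> [z [Txz Hz]] [w [Tcw Hw]].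
have [J M] := Tcomp Txz Tcw. have [J' M'] := IH _ _ Hz Hw.
by split; [exists (z `|` w)|exists (z `&` w)].
Qed.

Lemma chain_trans n m x y z : chain n x y -> chain m y z -> chain (n + m) x z.
Proof.
elim: n x => [|n IH] x /=; first by move=> ->.
move=> [w [Txw Hw]] Hm; exists w; split => //; exact: IH Hw Hm.
Qed.

Lemma chain_snoc n x z y : chain n x z -> T z y -> chain (S n) x y.
Proof.
elim: n x => [|n IH] x /=.
  by move=> -> Tzy; exists y; split.
move=> [w [Txw Hw]] Tzy; exists w; split => //; exact: IH Hw Tzy.
Qed.

Lemma chain_sym n x y : chain n x y -> chain n y x.
Proof.
elim: n x => [|n IH] x /=; first by move=> ->.
move=> [w [Txw Hw]]; apply: chain_snoc (IH _ Hw) (Tsym Txw).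
Qed.

Definition TS x y := exists n, chain n x y.

Lemma TS_cong : congruence TS.
Proof.
split; first by move=> x; exists 0.
split; first by move=> x y [n H]; exists n; apply: chain_sym.
split; first by move=> x y z [n H] [m H']; exists (n + m); apply: chain_trans H H'.
move=> a b c e [n H] [m H'].
have Hn : chain (n + m) a b by exact: (chain_trans H (chain_refl m b)).
have Hm : chain (n + m) c e by exact: (chain_trans (chain_refl n c) H').
by have [J M] := chain_comp Hn Hm; split; exists (n + m).
Qed.

Lemma T_bot_top_full : T \bot \top -> forall x y, T x y.
Proof.
move=> H x y.
have [_ M1] := Tcomp H (Trefl x). have [_ M2] := Tcomp (Tsym H) (Trefl y).
rewrite meet0x meet1x in M1. rewrite meet1x meet0x in M2.
have [J _] := Tcomp M1 M2. rewrite join0x joinx0 in J. by apply: Tsym.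
Qed.

Lemma atom_le (a w : L) : atom a -> w <= a -> w = a \/ w = \bot.
Proof.
move=> /andP[_ /existsPn Hn] wa.
case: (eqVneq w a) => [->|wna]; first by left.
case: (eqVneq w \bot) => [->|wnb]; first by right.
exfalso; move: (Hn w); rewrite !lt_neqAle wna wa eq_sym wnb le0x.
by [].
Qed.

Lemma coatom_ge (a w : L) : coatom a -> a <= w -> w = a \/ w = \top.
Proof.
move=> /andP[_ /existsPn Hn] wa.
case: (eqVneq w a) => [->|wna]; first by left.
case: (eqVneq w \top) => [->|wnb]; first by right.
exfalso; move: (Hn w); rewrite !lt_neqAle eq_sym wna wa wnb lex1.
by [].
Qed.

Lemma chain_atom a n : atom a -> chain n \bot a -> T \bot a.
Proof.
move=> Ha; elim: n => [|n IH] /=; first by move=> <-.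
move=> [z [Tz Hz]].
have [_ M] := Tcomp Tz (Trefl a). rewrite meet0x in M.
have [_ M'] := chain_comp Hz (chain_refl n a). rewrite meetxx in M'.
by case: (atom_le Ha (leIr a z)) => E; rewrite E in M M' => //; apply: IH.
Qed.

Lemma chain_coatom a n : coatom a -> chain n a \top -> T a \top.
Proof.
move=> Ha; elim: n a Ha => [|n IH] a Ha /=; first by move=> ->.
move=> [z [Tz Hz]].
have [J _] := Tcomp Tz (Trefl a). rewrite joinxx in J.
have [J' _] := chain_comp Hz (chain_refl n a). rewrite join1x in J'.
case: (coatom_ge Ha (leUr a z)) => E; rewrite E in J J' => //.
exact: IH.
Qed.

Lemma tol_main : simple_lattice (L := L) ->
  (\join_(a : L | atom a) a = \top \/ \meet_(a : L | coatom a) a = \bot) ->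
  is_identity_rel T \/ is_full_rel T.
Proof.
move=> Hs Hac.
case: (Hs _ TS_cong) => [Hid|Hfull].
  left => x y; split; last by move=> ->.
  by move=> Txy; apply/Hid; exists 1; exists y; split.
right; apply: T_bot_top_full.
case: Hac => <-.
  apply: (big_ind (fun J => T \bot J)) => //.
    move=> x y Hx Hy. have [J _] := Tcomp Hx Hy. by rewrite joinxx in J.
  move=> a Ha. have [n Hn] := Hfull \bot a. exact: chain_atom Ha Hn.
apply: (big_ind (fun J => T J \top)) => //.
  move=> x y Hx Hy. have [_ M] := Tcomp Hx Hy. by rewrite meetxx in M.
move=> a Ha. have [n Hn] := Hfull a \top. exact: chain_coatom Ha Hn.
Qed.
End P1.
Section P2.
Context {d : Order.disp_t} {L : finTBLatticeType d}.

Inductive PF (n : nat) : (('I_n -> L) -> L) -> Prop :=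
| PFvar i : PF (fun x => x i)
| PFconst c : PF (fun _ => c)
| PFjoin f g : PF f -> PF g -> PF (fun x => f x `|` g x)
| PFmeet f g : PF f -> PF g -> PF (fun x => f x `&` g x)
| PFext f g : PF f -> (forall x, f x = g x) -> PF g.

Lemma PF_pol n f : PF f -> exists p : lpoly L n, forall x, f x = lpoly_eval p x.
Proof.
elim=> {f} [i|c|f g _ [p Hp] _ [q Hq]|f g _ [p Hp] _ [q Hq]|f g _ [p Hp] E].
- by exists (PVar L i).
- by exists (PConst n c).
- by exists (PJoin p q) => x /=; rewrite Hp Hq.
- by exists (PMeet p q) => x /=; rewrite Hp Hq.
- by exists p => x; rewrite -E.
Qed.

Lemma pol_PF n (p : lpoly L n) : PF (fun x => lpoly_eval p x).
Proof. elim: p => /= [i|c|p Hp q Hq|p Hp q Hq]; by constructor. Qed.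

Lemma PF_mono n f : PF f -> forall x y : 'I_n -> L, (forall i, x i <= y i) -> f x <= f y.
Proof.
elim=> {f} [i|c|f g _ Hf _ Hg|f g _ Hf _ Hg|f g _ Hf E] x y Hxy //.
- by apply: leU2; [apply: Hf|apply: Hg].
- by apply: leI2; [apply: Hf|apply: Hg].
- by rewrite -!E; apply: Hf.
Qed.

Lemma PF_subst m n (f : ('I_m -> L) -> L) (gs : 'I_m -> ('I_n -> L) -> L) :
  PF f -> (forall j, PF (gs j)) -> PF (fun x => f (fun j => gs j x)).
Proof.
move=> Hf Hg; elim: Hf => {f} [i|c|f g _ Hf _ Hg'|f g _ Hf _ Hg'|f g _ Hf E].
- exact: Hg.
- exact: PFconst.
- exact: PFjoin.
- exact: PFmeet.
- by apply: PFext Hf _ => x; rewrite E.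
Qed.

Lemma PF_join n (I : eqType) (s : seq I) (P : pred I) (F : I -> ('I_n -> L) -> L) :
  (forall i, PF (F i)) -> PF (fun x => \join_(i <- s | P i) F i x).
Proof.
move=> HF; elim: s => [|a s IH].
  by apply: PFext (PFconst _ \bot) _ => x; rewrite big_nil.
case Pa: (P a).
  by apply: PFext (PFjoin (HF a) IH) _ => x; rewrite big_cons Pa.
by apply: PFext IH _ => x; rewrite big_cons Pa.
Qed.

Lemma PF_meet n (I : eqType) (s : seq I) (P : pred I) (F : I -> ('I_n -> L) -> L) :
  (forall i, PF (F i)) -> PF (fun x => \meet_(i <- s | P i) F i x).
Proof.
move=> HF; elim: s => [|a s IH].
  by apply: PFext (PFconst _ \top) _ => x; rewrite big_nil.
case Pa: (P a).
  by apply: PFext (PFmeet (HF a) IH) _ => x; rewrite big_cons Pa.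
by apply: PFext IH _ => x; rewrite big_cons Pa.
Qed.

Definition pr2 (x y : L) : 'I_2 -> L := fun i => if val i == 0%N then x else y.

Definition TG (x y : L) (u v : L) : Prop :=
  exists g, PF g /\ u = g (pr2 x y) /\ v = g (pr2 y x).

Lemma TG_tol x y : tolerance (TG x y).
Proof.
split; first by move=> c; exists (fun _ => c); split => //; apply: PFconst.
split.
  move=> u v [g [Hg [-> ->]]].
  pose sw := fun j : 'I_2 => if val j == 0%N then @Ordinal 2 1 isT else @Ordinal 2 0 isT.
  exists (fun z => g (fun j => z (sw j))); split.
    apply: (PF_subst (gs := fun j z => z (sw j))) Hg _.
    by move=> j; apply: PFvar.
  split; congr g; apply: functional_extensionality => j;
    by rewrite /pr2 /sw; case: (val j == 0%N).
move=> a b c e [g [Hg [-> ->]]] [h [Hh [-> ->]]]; split.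
  by exists (fun z => g z `|` h z); split => //; apply: PFjoin.
by exists (fun z => g z `&` h z); split => //; apply: PFmeet.
Qed.
End P2.
Section P3.
Context {d : Order.disp_t} {L : finTBLatticeType d}.
Hypothesis Htol : forall T : L -> L -> Prop, tolerance T -> is_identity_rel T \/ is_full_rel T.

Lemma sep (b y : L) : ~~ (b <= y) -> exists g : ('I_2 -> L) -> L,
  PF g /\ g (pr2 (b `|` y) y) = \top /\ g (pr2 y (b `|` y)) = \bot.
Proof.
move=> nby.
case: (Htol (TG_tol (b `|` y) y)) => [Hid|Hfull].
  exfalso; move/negP: nby; apply.
  have : TG (b `|` y) y (b `|` y) y.
    exists (fun z => z ord0); split; first exact: PFvar.
    by rewrite /pr2 /=.
  by move/Hid => E; rewrite -E leUl.
have [g [Hg [E1 E2]]] := Hfull \top \bot.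
by exists g; split => //; split.
Qed.

Lemma step_ex n (i : 'I_n) (b : L) : exists G : ('I_n -> L) -> L, PF G /\
  (forall z, b <= z i -> G z = \top) /\ (forall z, ~~ (b <= z i) -> G z = \bot).
Proof.
suff : forall s : seq L, exists G : ('I_n -> L) -> L, PF G /\
  (forall z, b <= z i -> G z = \top) /\
  (forall z, z i \in s -> ~~ (b <= z i) -> G z = \bot).
  move=> /(_ (enum L)) [G [HG [H1 H2]]]; exists G; split => //; split => // z.
  by apply: H2; rewrite mem_enum.
elim=> [|y s [G [HG [H1 H2]]]].
  by exists (fun _ => \top); split; [apply: PFconst|split].
case by_: (b <= y).
  exists G; split => //; split => // z; rewrite in_cons => /orP[/eqP ->|zs].
    by rewrite by_.
  exact: H2.
have [g [Hg [g1 g2]]] := sep (negbT by_).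
pose q := fun z : 'I_n -> L => g (pr2 (z i `|` y) y).
have Hq : PF q.
  apply: PFext (PF_subst (gs := fun j (z : 'I_n -> L) =>
     if val j == 0%N then z i `|` y else y) Hg _) _.
    move=> j; case: (val j == 0%N).
      by apply: PFjoin; [apply: PFvar|apply: PFconst].
    exact: PFconst.
  by move=> z.
exists (fun z => G z `&` q z); split; first exact: PFmeet.
split.
  move=> z bz; rewrite H1 // meet1x; apply/eqP; rewrite eq_le lex1 -g1.
  apply: (PF_mono Hg) => j; rewrite /pr2; case: (val j == 0%N) => //.
  exact: leU2.
move=> z; rewrite in_cons => /orP[/eqP zy|zs] nb; last by rewrite H2 // meet0x.
apply/eqP; rewrite eq_le le0x andbT -g2; apply: le_trans (leIr _ _) _.
rewrite /q zy joinxx; apply: (PF_mono Hg) => j; rewrite /pr2.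
by case: (val j == 0%N) => //; apply: leUr.
Qed.

Lemma cstep_ex n (c : 'I_n -> L) : exists G : ('I_n -> L) -> L, PF G /\
  (forall z, [forall i, c i <= z i] -> G z = \top) /\
  (forall z, ~~ [forall i, c i <= z i] -> G z = \bot).
Proof.
suff : forall s : seq 'I_n, exists G : ('I_n -> L) -> L, PF G /\
  (forall z, [forall i, c i <= z i] -> G z = \top) /\
  (forall z, ~~ all (fun i => c i <= z i) s -> G z = \bot).
  move=> /(_ (enum 'I_n)) [G [HG [H1 H2]]]; exists G; split => //; split => // z nz.
  apply: H2; apply: contra nz => /allP Ha; apply/forallP => i.
  by apply: Ha; rewrite mem_enum.
elim=> [|j s [G [HG [H1 H2]]]].
  by exists (fun _ => \top); split; [apply: PFconst|split].
have [u [Hu [u1 u2]]] := step_ex j (c j).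
exists (fun z => G z `&` u z); split; first exact: PFmeet.
split.
  by move=> z Hz; rewrite H1 // u1 ?meetxx //; move/forallP: Hz.
move=> z /=; rewrite negb_and => /orP[nj|ns].
  by rewrite u2 // meetx0.
by rewrite H2 // meet0x.
Qed.

Lemma agg_pol n (f : ('I_n -> L) -> L) : aggregation f -> pol01 f.
Proof.
move=> [fm [f0 f1]]; split; last by split.
suff : forall s : seq {ffun 'I_n -> L}, exists F, PF F /\
   forall z, F z <= f z /\ (forall c : {ffun 'I_n -> L}, c \in s ->
          [forall i, c i <= z i] -> f c <= F z).
  move=> /(_ (enum {ffun 'I_n -> L})) [F [HF HFz]].
  apply: PF_pol; apply: PFext HF _ => z.
  have [Hle Hge] := HFz z.
  apply/eqP; rewrite eq_le Hle /=.
  have E : z = (fun i => [ffun i => z i] i).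
    by apply: functional_extensionality => i; rewrite ffunE.
  rewrite {1}E; apply: Hge; first by rewrite mem_enum.
  by apply/forallP => i; rewrite ffunE.
elim=> [|c s [F [HF HFz]]].
  by exists (fun _ => \bot); split; [apply: PFconst|move=> z; split].
have [G [HG [G1 G2]]] := cstep_ex c.
exists (fun z => F z `|` (f c `&` G z)); split.
  by apply: PFjoin => //; apply: PFmeet => //; apply: PFconst.
move=> z; have [Fl Fg] := HFz z; split.
  rewrite leUx Fl /=.
  case Hc: [forall i, c i <= z i].
    rewrite G1 // meetx1; apply: fm => i; by move/forallP: Hc.
  by rewrite G2 ?Hc // meetx0 le0x.
move=> c'; rewrite in_cons => /orP[/eqP ->|Hs] Hc.
  by rewrite G1 // meetx1 leUr.
by apply: le_trans (Fg _ Hs Hc) (leUl _ _).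
Qed.

Lemma pol_agg n (f : ('I_n -> L) -> L) : pol01 f -> aggregation f.
Proof.
move=> [[p Hp] [f0 f1]]; split => //.
move=> x y Hxy; rewrite !Hp; exact: (PF_mono (pol_PF p)).
Qed.
End P3.

Theorem mainTheorem8 (d : Order.disp_t) (L : finTBLatticeType d) :
  simple_lattice (L := L) ->
  (\join_(a : L | atom a) a = \top \/
   \meet_(a : L | coatom a) a = \bot) ->
  (forall T : L -> L -> Prop, tolerance T -> is_identity_rel T \/ is_full_rel T) /\
  (forall (n : nat) (f : ('I_n -> L) -> L), (0 < n)%N ->
     (aggregation f <-> pol01 f)).
Proof.
move=> Hs Hac.
have Htol : forall T : L -> L -> Prop, tolerance T -> is_identity_rel T \/ is_full_rel T.
  move=> T [Tr [Ts Tc]]; exact: (tol_main Tr Ts Tc Hs Hac).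
split => // n f _; split; [exact: agg_pol|exact: pol_agg].
Qed.
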